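(* Let $(R,\mathfrak m)$ be a noetherian local ring and $\nu$ a valuation centered on $R$. Then there exists a local blowing up $R\to R^{(1)}$ with respect to $\nu$ such that $\mathrm{Nil}(R^{(1)})$ is the only associated prime ideal of $R^{(1)}$.
   Context: All rings are commutative noetherian with $1$; $\mathrm{Nil}(A)$ denotes the nilradical of $A$. A valuation on a ring $R$ is a map $\nu:R\to\Gamma\cup\{\infty\}$ ($\Gamma$ an ordered abelian group) with $\nu(ab)=\nu(a)+\nu(b)$, $\nu(a+b)\ge\min\{\nu(a),\nu(b)\}$, $\nu(1)=0$, $\nu(0)=\infty$, whose support $\mathrm{supp}(\nu)=\{a:\nu(a)=\infty\}$ is a minimal prime ideal; it extends to localizations at multiplicative sets disjoint from the support via $\nu(a/s)=\nu(a)-\nu(s)$ and restricts to subrings, implicitly. $\nu$ has a center on $R$ if $\nu\ge0$ on $R$; its center is $\mathfrak C_\nu(R)=\{a:\nu(a)>0\}$. $\nu$ is centered on $(R,\mathfrak m)$ if $\nu\ge0$ on $R$ and $\nu>0$ on $\mathfrak m$. Local blowing up: for $b\in R\setminus\mathrm{supp}(\nu)$ let $J(b)=\bigcup_{i\ge1}\mathrm{ann}_R(b^i)$, so $R/J(b)\subseteq R_b$. Given $a_1,\ldots,a_r\in R$ with $\nu(a_i)\ge\nu(b)$, let $R'=(R/J(b))[a_1/b,\ldots,a_r/b]\subseteq R_b$ and $R^{(1)}=R'_{\mathfrak C_\nu(R')}$; the canonical map $R\to R^{(1)}$ is the local blowing up of $R$ with respect to $\nu$ along $(b,a_1,\ldots,a_r)$.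 *)

(* Defs.v *)
(* Rings that arise as localizations are presented as
   "setoid rings": a carrier of representatives, a predicate selecting the
   admissible representatives, and an equality relation on representatives. *)
From HB Require Import structures.
From mathcomp Require Import all_boot all_order all_algebra.
Set Implicit Arguments. Unset Strict Implicit. Unset Printing Implicit Defensive.
Import Order.TTheory GRing.Theory Num.Theory.
Local Open Scope ring_scope.

Record sring := SRing {
  scar : Type;
  sval : scar -> Prop;                  (* admissible representatives *)
  seqv : scar -> scar -> Prop;          (* equality of the ring elements *)
  szero : scar; sone : scar;
  sadd : scar -> scar -> scar;
  sopp : scar -> scar;
  smul : scar -> scar -> scar }.

Section SringDefs.
Variable S : sring.

Definition is_ideal (I : scar S -> Prop) : Prop :=
  (forall x, I x -> sval x) /\
  (forall x y, sval y -> seqv x y -> I x -> I y) /\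
  I (szero S) /\
  (forall x y, I x -> I y -> I (sadd x y)) /\
  (forall x, I x -> I (sopp x)) /\
  (forall a x, sval a -> I x -> I (smul a x)).

Definition is_proper (I : scar S -> Prop) : Prop := ~ I (sone S).

Definition is_prime (P : scar S -> Prop) : Prop :=
  is_ideal P /\ is_proper P /\
  (forall x y, sval x -> sval y -> P (smul x y) -> P x \/ P y).

Definition is_maximal (M : scar S -> Prop) : Prop :=
  is_ideal M /\ is_proper M /\
  (forall J, is_ideal J -> is_proper J -> (forall x, M x -> J x) ->
     forall x, J x -> M x).

Definition is_minimal_prime (P : scar S -> Prop) : Prop :=
  is_prime P /\
  (forall Q, is_prime Q -> (forall x, Q x -> P x) -> forall x, P x -> Q x).

Fixpoint spow (x : scar S) (n : nat) : scar S :=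
  match n with O => sone S | n'.+1 => smul x (spow x n') end.

Definition nilradical (x : scar S) : Prop :=
  sval x /\ exists n, seqv (spow x n) (szero S).

Definition is_associated_prime (P : scar S -> Prop) : Prop :=
  is_prime P /\
  exists z, sval z /\
    forall x, P x <-> (sval x /\ seqv (smul x z) (szero S)).
End SringDefs.

Definition sring_of (R : comNzRingType) : sring :=
  @SRing R (fun _ => True) (@eq R) 0 1 +%R (fun x => - x) *%R.

Definition noetherian (R : comNzRingType) : Prop :=
  forall I : R -> Prop, is_ideal (S := sring_of R) I ->
    exists s : seq R, forall x,
      I x <-> exists cs : seq R, x = \sum_(i < size s) cs`_i * s`_i.

Definition local_ring (R : comNzRingType) (m : R -> Prop) : Prop :=
  is_maximal (S := sring_of R) m /\
  forall M, is_maximal (S := sring_of R) M -> forall x, M x <-> m x.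

Definition ordered_abelian_group (G : porderZmodType) : Prop :=
  (forall x y : G, (x <= y) || (y <= x)) /\
  (forall x y z : G, x <= y -> x + z <= y + z).

Section Valuation.
Variable G : porderZmodType.
(* G ∪ {∞}, with None = ∞ *)
Definition oadd (x y : option G) : option G :=
  match x, y with Some a, Some c => Some (a + c) | _, _ => None end.
Definition ole (x y : option G) : bool :=
  match x, y with
  | _, None => true
  | None, Some _ => false
  | Some a, Some c => a <= c end.
Definition omin (x y : option G) : option G := if ole x y then x else y.
Definition opos (x : option G) : bool :=
  match x with None => true | Some a => 0 < a end.

Definition is_valuation (R : comNzRingType) (nu : R -> option G) : Prop :=
  (forall a c, nu (a * c) = oadd (nu a) (nu c)) /\
  (forall a c, ole (omin (nu a) (nu c)) (nu (a + c))) /\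
  nu 1 = Some 0 /\ nu 0 = None /\
  is_minimal_prime (S := sring_of R) (fun a => nu a = None).

Definition centered_on (R : comNzRingType) (nu : R -> option G)
    (m : R -> Prop) : Prop :=
  (forall a, ole (Some 0) (nu a)) /\ (forall a, m a -> opos (nu a)).
End Valuation.

Section Blowup.
Variables (R : comNzRingType) (G : porderZmodType) (nu : R -> option G).
Variables (b : R) (as_ : seq R).

(* R_b : (x, n) represents x / b^n *)
Definition Rb := (R * nat)%type.
Definition beqv (p q : Rb) : Prop :=
  exists k, b ^+ k * (p.1 * b ^+ q.2 - q.1 * b ^+ p.2) = 0.
Definition badd (p q : Rb) : Rb := (p.1 * b ^+ q.2 + q.1 * b ^+ p.2, (p.2 + q.2)%N).
Definition bmul (p q : Rb) : Rb := (p.1 * q.1, (p.2 + q.2)%N).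
Definition bopp (p : Rb) : Rb := (- p.1, p.2).
Definition bzero : Rb := (0, 0%N).
Definition bone : Rb := (1, 0%N).

(* generators of R' = (R/J(b))[a_1/b, ..., a_r/b] inside R_b *)
Inductive Rgen : Rb -> Prop :=
  | Rgen_R x : Rgen (x, 0%N)
  | Rgen_a a : a \in as_ -> Rgen (a, 1%N)
  | Rgen_add p q : Rgen p -> Rgen q -> Rgen (badd p q)
  | Rgen_opp p : Rgen p -> Rgen (bopp p)
  | Rgen_mul p q : Rgen p -> Rgen q -> Rgen (bmul p q).

Definition inR' (p : Rb) : Prop := exists q, Rgen q /\ beqv q p.

Definition nub (p : Rb) : option G :=
  match nu b, nu p.1 with
  | Some vb, Some vx => Some (vx - vb *+ p.2)
  | _, _ => None end.

(* elements of R' outside the center C_nu(R') *)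
Definition R'offC (p : Rb) : Prop := inR' p /\ ~~ opos (nub p).

(* R^(1) = R'_{C_nu(R')} : (f, g) represents f / g *)
Definition blowup : sring :=
  @SRing (Rb * Rb)%type
    (fun fg => inR' fg.1 /\ R'offC fg.2)
    (fun fg fg' => exists h, R'offC h /\
        beqv (bmul h (badd (bmul fg.1 fg'.2) (bopp (bmul fg'.1 fg.2)))) bzero)
    (bzero, bone) (bone, bone)
    (fun fg fg' => (badd (bmul fg.1 fg'.2) (bmul fg'.1 fg.2), bmul fg.2 fg'.2))
    (fun fg => (bopp fg.1, fg.2))
    (fun fg fg' => (bmul fg.1 fg'.1, bmul fg.2 fg'.2)).
End Blowup.

(* Main.v *)
Require Import Defs.
From HB Require Import structures.
From mathcomp Require Import all_boot all_order all_algebra.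
From mathcomp Require Import ring.
From Stdlib Require Import Classical ClassicalEpsilon.
Import Order.TTheory GRing.Theory Num.Theory.
Local Open Scope ring_scope.

Section RLevel.
Variables (R : comNzRingType) (G : porderZmodType) (nu : R -> option G).
Hypothesis Hval : is_valuation nu.

Definition Pr (r : R) := nu r = None.

Lemma Pr_mul x y : Pr (x * y) <-> Pr x \/ Pr y.
Proof.
rewrite /Pr; case: Hval => Hm _; rewrite Hm.
by case: (nu x) => [a|]; case: (nu y) => [c|] //=; intuition.
Qed.

Lemma Pr_mull x y : Pr x -> Pr (x * y).
Proof. by move=> h; apply/Pr_mul; left. Qed.
Lemma Pr_mulr x y : Pr y -> Pr (x * y).
Proof. by move=> h; apply/Pr_mul; right. Qed.

Lemma Pr_add x y : Pr x -> Pr y -> Pr (x + y).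
Proof.
rewrite /Pr => hx hy; case: Hval => _ [Ha _]; move: (Ha x y).
by rewrite hx hy /omin /=; case: (nu (x + y)).
Qed.

Lemma Pr0 : Pr 0.
Proof. by case: Hval => _ [_ [_ [h _]]]. Qed.

Lemma notPr1 : ~ Pr 1.
Proof. by case: Hval => _ [_ [h _]]; rewrite /Pr h. Qed.

Lemma Pr_opp x : Pr x -> Pr (- x).
Proof. by move=> h; rewrite -mulN1r; apply: Pr_mulr. Qed.

Lemma notPr_exp x n : ~ Pr x -> ~ Pr (x ^+ n).
Proof.
move=> hx; elim: n => [|n IH]; first by rewrite expr0; apply: notPr1.
by rewrite exprS => /Pr_mul [].
Qed.

Lemma notPr_mul x y : ~ Pr x -> ~ Pr y -> ~ Pr (x * y).
Proof. by move=> hx hy /Pr_mul []. Qed.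

Definition I (y : R) := exists t, ~ Pr t /\ t * y = 0.

Lemma I_Pr y : I y -> Pr y.
Proof.
case=> t [ht e]; have : Pr (t * y) by rewrite e; apply: Pr0.
by case/Pr_mul.
Qed.

Lemma I_cancel t y : ~ Pr t -> I (t * y) -> I y.
Proof.
move=> ht [t' [ht' e]]; exists (t' * t); split; first exact: notPr_mul.
by rewrite -mulrA.
Qed.

Lemma I0 : I 0.
Proof. by exists 1; split; [apply: notPr1|rewrite mulr0]. Qed.

Lemma I_add x y : I x -> I y -> I (x + y).
Proof.
move=> [t [ht e]] [t' [ht' e']]; exists (t * t'); split; first exact: notPr_mul.
have -> : t * t' * (x + y) = t' * (t * x) + t * (t' * y) by ring.
by rewrite e e' !mulr0 addr0.
Qed.

Lemma I_mull a y : I y -> I (a * y).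
Proof. by move=> [t [ht e]]; exists t; split=> //; rewrite mulrCA e mulr0. Qed.

Lemma I_opp y : I y -> I (- y).
Proof. by move=> h; rewrite -mulN1r; apply: I_mull. Qed.

Lemma I_sub x y : I x -> I y -> I (x - y).
Proof. by move=> hx hy; apply: I_add => //; apply: I_opp. Qed.

Lemma notI1 : ~ I 1.
Proof. by move/I_Pr; apply: notPr1. Qed.

Lemma I_eq x y : x = y -> I x -> I y.
Proof. by move=> ->. Qed.


Definition ideal (J : R -> Prop) := is_ideal (S := sring_of R) J.
Definition sub (J J' : R -> Prop) := forall x, J x -> J' x.

Lemma idealP (J : R -> Prop) : ideal J <->
  [/\ J 0, (forall x y, J x -> J y -> J (x + y)), (forall x, J x -> J (- x))
    & (forall a x, J x -> J (a * x))].
Proof.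
split.
  by case=> _ [_ [h0 [hadd [hopp hmul]]]]; split=> // a x; apply: hmul.
case=> h0 hadd hopp hmul; split=> //; split; first by move=> x y _ /= ->.
split; first exact: h0. split; [move=> x y hx hy; exact: (hadd x y hx hy) | split; [move=> x hx; exact: (hopp x hx) | move=> a x _ hx; exact: (hmul a x hx)]].
Qed.

Lemma ideal_sum (J : R -> Prop) n (F : 'I_n -> R) : ideal J ->
  (forall i, J (F i)) -> J (\sum_(i < n) F i).
Proof.
case/idealP=> h0 hadd _ _ hF.
by apply: (big_ind J) => // i _; apply: hF.
Qed.

Lemma gen_in (J : R -> Prop) (s : seq R) :
  (forall x, J x <-> exists cs : seq R, x = \sum_(i < size s) cs`_i * s`_i) ->
  forall i, (i < size s)%N -> J s`_i.
Proof.
move=> H i Hi; apply/H.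
exists [seq (j == i)%:R | j <- iota 0 (size s)].
rewrite (bigD1 (Ordinal Hi)) //= big1 => [|j /negbTE hj].
  by rewrite (nth_map 0%N) ?size_iota // nth_iota // add0n eqxx mul1r addr0.
rewrite (nth_map 0%N) ?size_iota // nth_iota // add0n.
have -> : (nat_of_ord j == i) = false by move: hj; rewrite -val_eqE.
by rewrite mul0r.
Qed.

Arguments gen_in {J s} H {i}.

Lemma I_ideal : ideal I.
Proof.
apply/idealP; split; [exact: I0|exact: I_add|exact: I_opp|exact: I_mull].
Qed.

Lemma Pr_ideal : ideal Pr.
Proof.
apply/idealP; split; [exact: Pr0|exact: Pr_add|exact: Pr_opp|].
by move=> a x; apply: Pr_mulr.
Qed.

Section Noeth.
Hypothesis Hn : noetherian R.

Lemma noeth_max (F : (R -> Prop) -> Prop) J0 : (forall J, F J -> ideal J) -> F J0 ->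
  exists J, F J /\ forall J', F J' -> sub J J' -> sub J' J.
Proof.
move=> HF F0; apply: NNPP => Hno.
have step : forall J, F J -> exists J', F J' /\ sub J J' /\ exists x, J' x /\ ~ J x.
  move=> J FJ; apply: NNPP => H2; apply: Hno; exists J; split=> // J' FJ' sJ x J'x.
  apply: NNPP => nJx; apply: H2; exists J'; split=> //; split=> //; exists x; split=> //.
pose nxt J := epsilon (inhabits J0) (fun J' => F J' /\ sub J J' /\ exists x, J' x /\ ~ J x).
pose f := fix f n := match n with 0%N => J0 | n.+1 => nxt (f n) end.
have Fn : forall n, F (f n).
  by elim=> [|n IH] //=; exact: (epsilon_spec _ _ (step _ IH)).1.
have Sn : forall n, sub (f n) (f n.+1) /\ exists x, f n.+1 x /\ ~ f n x.
  by move=> n; exact: (epsilon_spec _ _ (step _ (Fn n))).2.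
have mono : forall m n, (m <= n)%N -> sub (f m) (f n).
  move=> m n; elim: n => [|n IH]; first by rewrite leqn0 => /eqP ->.
  rewrite leq_eqVlt => /orP [/eqP -> //|]; rewrite ltnS => /IH h x /h.
  exact: (Sn n).1.
pose U x := exists n, f n x.
have UI : ideal U.
  apply/idealP; split.
  - by exists 0%N; case/idealP: (HF _ (Fn 0%N)).
  - move=> x y [n hx] [n' hy]; exists (maxn n n').
    case/idealP: (HF _ (Fn (maxn n n'))) => _ ha _ _; apply: ha.
      by apply: (mono n) => //; rewrite leq_maxl.
    by apply: (mono n') => //; rewrite leq_maxr.
  - by move=> x [n hx]; exists n; case/idealP: (HF _ (Fn n)) => _ _ ho _; apply: ho.
  - by move=> a x [n hx]; exists n; case/idealP: (HF _ (Fn n)) => _ _ _ hm; apply: hm.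
have [s Hs] := Hn U UI.
have hk : forall k, (k <= size s)%N -> exists N, forall i, (i < k)%N -> f N s`_i.
  elim=> [|k IH] hk; first by exists 0%N.
  have [N HN] := IH (ltnW hk).
  have [n hn] := gen_in Hs hk.
  exists (maxn N n) => i; rewrite ltnS leq_eqVlt => /orP [/eqP ->|hi].
    by apply: (mono n) => //; rewrite leq_maxr.
  by apply: (mono N); [rewrite leq_maxl|apply: HN].
have [N HN] := hk _ (leqnn _).
have UN : sub U (f N).
  move=> y /Hs [cs ->]; apply: ideal_sum => [|i]; first exact: HF.
  by case/idealP: (HF _ (Fn N)) => _ _ _ hm; apply: hm; apply: HN.
have [x [h1 h2]] := (Sn N).2.
by apply: h2; apply: UN; exists N.+1.
Qed.

Lemma nilp_P x : Pr x -> exists n, I (x ^+ n).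
Proof.
move=> hx; apply: NNPP => H.
have H' : forall n t, ~ Pr t -> t * x ^+ n <> 0.
  by move=> n t ht e; apply: H; exists n, t.
pose F J := ideal J /\ forall y, J y -> forall t n, ~ Pr t -> y <> t * x ^+ n.
have F0 : F (fun y => y = 0).
  split; last by move=> y -> t n ht e; apply: (H' n t ht); rewrite -e.
  apply/idealP; split=> //.
  - by move=> ? ? -> ->; rewrite addr0.
  - by move=> ? ->; rewrite oppr0.
  - by move=> ? ? ->; rewrite mulr0.
have [J [[JI Jd] Jmax]] := @noeth_max F _ (fun J (h : F J) => h.1) F0.
have [J0 Jadd Jopp Jmul] : [/\ J 0, (forall x y, J x -> J y -> J (x + y)), (forall x, J x -> J (- x))
    & (forall a x, J x -> J (a * x))] by apply/idealP.
have JP : sub J Pr.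
  move=> y Jy; apply: NNPP => hy; apply: (Jd y Jy y 0%N hy).
  by rewrite expr0 mulr1.
have Jprime : is_prime (S := sring_of R) J.
  split=> //; split.
    move=> J1; apply: (Jd 1 J1 1 0%N notPr1); by rewrite expr0 mulr1.
  move=> x1 y1 _ _ /= Jxy; apply: NNPP => /not_or_and [nx ny].
  have ext : forall z, ~ J z -> exists y t n, (exists j r, J j /\ y = j + r * z)
         /\ ~ Pr t /\ y = t * x ^+ n.
    move=> z nz; apply: NNPP => Hc.
    pose Jz y := exists j r, J j /\ y = j + r * z.
    have FJz : F Jz.
      split.
        apply/idealP; split.
        - by exists 0, 0; rewrite mul0r addr0.
        - move=> a c [j [r [hj ->]]] [j' [r' [hj' ->]]].
          by exists (j + j'), (r + r'); split; [apply: Jadd|rewrite mulrDl; ring].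
        - move=> a [j [r [hj ->]]]; exists (- j), (- r); split; first exact: Jopp.
          by rewrite opprD mulNr.
        - move=> a c [j [r [hj ->]]]; exists (a * j), (a * r); split; first exact: Jmul.
          by rewrite mulrDr mulrA.
      by move=> y Jy t n ht e; apply: Hc; exists y, t, n.
    have sJ : sub J Jz by move=> y Jy; exists y, 0; rewrite mul0r addr0.
    apply: nz; apply: (Jmax _ FJz sJ); exists 0, 1; by rewrite mul1r add0r.
  have [yy1 [t1 [n1 [[j1 [r1 [hj1 e1]]] [ht1 e1']]]]] := ext _ nx.
  have [yy2 [t2 [n2 [[j2 [r2 [hj2 e2]]] [ht2 e2']]]]] := ext _ ny.
  have hJ : J ((t1 * t2) * x ^+ (n1 + n2)).
    have -> : (t1 * t2) * x ^+ (n1 + n2) = (t1 * x ^+ n1) * (t2 * x ^+ n2).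
      by rewrite exprD; ring.
    rewrite -e1' -e2' e1 e2.
    have -> : (j1 + r1 * x1) * (j2 + r2 * y1) =
       (j1 * (j2 + r2 * y1) + (r1 * x1) * j2) + (r1 * r2) * (x1 * y1) by ring.
    apply: (Jadd); last exact: (Jmul).
    apply: (Jadd); first by rewrite mulrC; apply: (Jmul).
    exact: (Jmul).
  by apply: (Jd _ hJ (t1 * t2) (n1 + n2)%N); first exact: notPr_mul.
case: Hval => _ [_ [_ [_ [_ Hmin]]]].
have Jx : J x := Hmin J Jprime JP x hx.
by apply: (Jd x Jx 1 1%N notPr1); rewrite expr1 mul1r.
Qed.

Lemma gen_b : exists b, ~ Pr b /\ forall y, I y -> b * y = 0.
Proof.
have [s Hs] := Hn I I_ideal.
have hk : forall k, (k <= size s)%N -> exists b, ~ Pr b /\ forall i, (i < k)%N -> b * s`_i = 0.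
  elim=> [|k IH] hk; first by exists 1; split=> //; apply: notPr1.
  have [b [hb Hb]] := IH (ltnW hk).
  have [t [ht et]] := gen_in Hs hk.
  exists (b * t); split; first exact: notPr_mul.
  move=> i; rewrite ltnS leq_eqVlt => /orP [/eqP ->|hi].
    by rewrite -mulrA et mulr0.
  by rewrite mulrAC Hb // mul0r.
have [b [hb Hb]] := hk _ (leqnn _).
exists b; split=> // y /Hs [cs ->]; rewrite mulr_sumr big1 // => i _.
by rewrite mulrCA Hb // mulr0.
Qed.

Lemma z0_exists : exists z0, ~ I z0 /\ forall x, I (x * z0) <-> Pr x.
Proof.
have [s Hs] := Hn _ Pr_ideal.
have ex : forall p z n, I (p ^+ n * z) -> ~ I z -> exists e, ~ I (p ^+ e * z) /\ I (p ^+ e.+1 * z).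
  move=> p z; elim=> [|n IH]; first by rewrite expr0 mul1r.
  move=> hn hz; case: (classic (I (p ^+ n * z))) => h; first exact: IH.
  by exists n.
have hk : forall k, (k <= size s)%N -> exists z, ~ I z /\ forall i, (i < k)%N -> I (s`_i * z).
  elim=> [|k IH] hk; first by exists 1; split=> //; apply: notI1.
  have [z [hz Hz]] := IH (ltnW hk).
  have [n hn] := @nilp_P _ (gen_in Hs hk).
  have hn' : I (s`_k ^+ n * z) by rewrite mulrC; apply: I_mull.
  have [e [he1 he2]] := ex _ _ _ hn' hz.
  exists (s`_k ^+ e * z); split=> // i; rewrite ltnS leq_eqVlt => /orP [/eqP ->|hi].
    by rewrite mulrA -exprS.
  by rewrite mulrCA; apply: I_mull; apply: Hz.
have [z [hz Hz]] := hk _ (leqnn _).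
exists z; split=> // x; split.
  move=> h; apply: NNPP => hx; apply: hz; exact: (@I_cancel x z hx h).
move=> /Hs [cs ->]; rewrite mulr_suml; apply: ideal_sum; first exact: I_ideal.
by move=> i; rewrite -mulrA; apply: I_mull; apply: Hz.
Qed.

Section Blow.
Hypothesis HG : ordered_abelian_group G.
Variable b : R.
Hypothesis hb : ~ Pr b.
Hypothesis Hb : forall y, I y -> b * y = 0.

Local Notation B := (blowup nu b [::]).

Lemma Zb y : (exists k, b ^+ k * y = 0) <-> I y.
Proof.
split; last by move=> h; exists 1%N; rewrite expr1; apply: Hb.
by case=> k e; exists (b ^+ k); split=> //; apply: notPr_exp.
Qed.

Lemma beqvE (p q : Rb R) : beqv b p q <-> I (p.1 * b ^+ q.2 - q.1 * b ^+ p.2).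
Proof. exact: Zb. Qed.

Lemma I_lin u v X a c : I u -> I v -> X = a * u + c * v -> I X.
Proof. by move=> hu hv ->; apply: I_add; apply: I_mull. Qed.

Lemma inR'_mul p q : inR' b [::] p -> inR' b [::] q -> inR' b [::] (bmul p q).
Proof.
case: p => p1 p2; case: q => q1 q2.
move=> [[p'1 p'2] [Rp /beqvE /= ep]] [[q'1 q'2] [Rq /beqvE /= eq]].
exists (bmul (p'1, p'2) (q'1, q'2)); split; first by constructor.
apply/beqvE => /=; apply: (@I_lin _ _ _ (q'1 * b ^+ q2) (p1 * b ^+ p'2) ep eq).
by rewrite !exprD; ring.
Qed.

Lemma inR'_add p q : inR' b [::] p -> inR' b [::] q -> inR' b [::] (badd b p q).
Proof.
case: p => p1 p2; case: q => q1 q2.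
move=> [[p'1 p'2] [Rp /beqvE /= ep]] [[q'1 q'2] [Rq /beqvE /= eq]].
exists (badd b (p'1, p'2) (q'1, q'2)); split; first by constructor.
apply/beqvE => /=; apply: (@I_lin _ _ _ (b ^+ q'2 * b ^+ q2) (b ^+ p'2 * b ^+ p2) ep eq).
by rewrite !exprD; ring.
Qed.

Lemma inR'_opp p : inR' b [::] p -> inR' b [::] (bopp p).
Proof.
case: p => p1 p2.
move=> [[p'1 p'2] [Rp /beqvE /= ep]].
exists (bopp (p'1, p'2)); split; first by constructor.
apply/beqvE => /=; apply: (@I_lin _ _ _ (-1) (0) ep ep).
by ring.
Qed.

Lemma inR'_R x : inR' b [::] (x, 0%N).
Proof.
exists (x, 0%N); split; first by constructor.
by apply/beqvE; rewrite /= subrr; apply: I0.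
Qed.

Lemma nub_some : exists vb, nu b = Some vb.
Proof. by move: hb; rewrite /Pr; case: (nu b) => [vb|] // _; exists vb. Qed.

Lemma offC_notPr h : R'offC nu b [::] h -> ~ Pr h.1.
Proof. by case=> _; rewrite /nub => H hP; move: H; rewrite hP; case: (nu b). Qed.

Lemma offC_bone : R'offC nu b [::] (bone R).
Proof.
split; first exact: inR'_R.
have [vb E] := nub_some.
case: Hval => _ [_ [H1 _]].
by rewrite /nub E /= H1 /= mulr0n subr0 ltxx.
Qed.

Lemma G_nonpos_add (u v : G) : ~~ (0 < u) -> ~~ (0 < v) -> ~~ (0 < u + v).
Proof.
case: HG => Htot Htr.
have le0 : forall w : G, ~~ (0 < w) -> w <= 0.
  move=> w hw; case/orP: (Htot w 0) => // h.
  by move: hw; rewrite lt_def h andbT negbK => /eqP ->; exact: lexx.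
move=> /le0 hu /le0 hv.
have huv : u + v <= 0 by apply: le_trans (Htr _ _ v hu) _; rewrite add0r.
by apply/negP => h; have := lt_le_trans h huv; rewrite ltxx.
Qed.

Lemma offC_mul p q : R'offC nu b [::] p -> R'offC nu b [::] q -> R'offC nu b [::] (bmul p q).
Proof.
move=> [ip hp] [iq hq]; split; first exact: inR'_mul.
have [vb E] := nub_some.
case: Hval => Hm _.
move: hp hq; rewrite /nub E /= Hm.
case: (nu p.1) => [vp|] //; case: (nu q.1) => [vq|] //= hp hq.
have -> : vp + vq - vb *+ (p.2 + q.2) = (vp - vb *+ p.2) + (vq - vb *+ q.2).
  by rewrite mulrnDr opprD addrACA.
exact: G_nonpos_add.
Qed.

Definition num (x : scar B) : R := x.1.1 * b ^+ x.2.2.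
Definition den (x : scar B) : R := x.2.1 * b ^+ x.1.2.

Lemma den_notPr x : Defs.sval x -> ~ Pr (den x).
Proof.
case=> _ /offC_notPr h; rewrite /den; apply: notPr_mul => //.
exact: notPr_exp.
Qed.

Lemma num_Pr x : Pr (num x) <-> Pr x.1.1.
Proof.
rewrite /num; split; last exact: Pr_mull.
by case/Pr_mul => // /(@notPr_exp b x.2.2 hb).
Qed.

Lemma seqvE (x y : scar B) : seqv x y <-> I (num x * den y - num y * den x).
Proof.
case: x => [[a i] [c j]]; case: y => [[a' i'] [c' j']]; rewrite /num /den /=.
split.
  case=> h [hc /beqvE /=]; rewrite expr0 mulr1 mul0r subr0 => H.
  have := @I_cancel h.1 _ (@offC_notPr h hc) H.
  by apply: I_eq; rewrite !exprD; ring.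
move=> H; exists (bone R); split; first exact: offC_bone.
apply/beqvE => /=; move: H; apply: I_eq; rewrite !exprD; ring.
Qed.

Lemma sval_mul (x y : scar B) : Defs.sval x -> Defs.sval y -> Defs.sval (smul x y).
Proof.
move=> [x1 x2] [y1 y2]; split; [exact: inR'_mul|exact: offC_mul].
Qed.

Lemma sval_add (x y : scar B) : Defs.sval x -> Defs.sval y -> Defs.sval (sadd x y).
Proof.
move=> [x1 x2] [y1 y2]; split; last exact: offC_mul.
by apply: inR'_add; apply: inR'_mul => //; [case: y2|case: x2].
Qed.

Lemma sval_opp (x : scar B) : Defs.sval x -> Defs.sval (sopp x).
Proof. by move=> [x1 x2]; split=> //; apply: inR'_opp. Qed.

Lemma sval_one : Defs.sval (sone B).
Proof. by split; [exact: inR'_R|exact: offC_bone]. Qed.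

Lemma sval_zero : Defs.sval (szero B).
Proof. by split; [exact: inR'_R|exact: offC_bone]. Qed.

Lemma num_mul (x y : scar B) : num (smul x y) = num x * num y.
Proof. by rewrite /num /= exprD; ring. Qed.

Lemma num_one : num (sone B) = 1.
Proof. by rewrite /num /= mulr1. Qed.

Lemma num_spow (x : scar B) n : num (spow x n) = num x ^+ n.
Proof. by elim: n => [|n IH]; [rewrite num_one|rewrite /= num_mul IH exprS]. Qed.

Lemma sval_spow (x : scar B) n : Defs.sval x -> Defs.sval (spow x n).
Proof. by move=> hx; elim: n => [|n IH]; [exact: sval_one|exact: sval_mul]. Qed.

Lemma seqv0E (x : scar B) : seqv x (szero B) <-> I (num x).
Proof.
rewrite seqvE /num /den /=.
by split; apply: I_eq; ring.
Qed.

Lemma Pr_exp_inv r n : Pr (r ^+ n) -> Pr r.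
Proof.
elim: n => [|n IH]; first by rewrite expr0 => /notPr1.
by rewrite exprS => /Pr_mul [].
Qed.

Lemma nilE (x : scar B) : nilradical x <-> Defs.sval x /\ Pr x.1.1.
Proof.
split.
  case=> sx [n /seqv0E]; rewrite num_spow => /I_Pr /Pr_exp_inv /num_Pr; by [].
move=> [sx /num_Pr hx]; split=> //.
have [n hn] := @nilp_P _ hx.
by exists n; apply/seqv0E; rewrite num_spow.
Qed.

Lemma core (P : scar B -> Prop) :
  is_associated_prime P <-> (forall x, P x <-> nilradical x).
Proof.
have [z0 [hz0 Hz0]] := z0_exists.
split.
- case=> [[[Pval [Pseqv [P0 _]]] [Pprop Pprime]] [z [sz Hz]]] x.
  have nz : ~ I (num z).
    move=> h; apply: Pprop; apply/Hz; split; first exact: sval_one.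
    by apply/seqv0E; rewrite num_mul num_one mul1r.
  split.
  + move=> /Hz [sx /seqv0E]; rewrite num_mul => h.
    apply/nilE; split=> //; apply/num_Pr; apply: NNPP => hx.
    by apply: nz; exact: (@I_cancel _ _ hx h).
  + move=> /nilE [sx hx].
    have [n hn] := @nilp_P _ (proj2 (num_Pr x) hx).
    have Pn : P (spow x n).
      apply: (Pseqv (szero B)); first exact: sval_spow.
        have hn' : I (num (spow x n)) by rewrite num_spow.
        apply/seqvE; move: (@I_opp _ hn'); apply: I_eq; rewrite /num /den /=; ring.
      exact: P0.
    elim: n Pn {hn} => [|n IH] /=; first by move=> /Pprop.
    move=> h; case: (Pprime _ _ sx (@sval_spow x n sx) h) => //; exact: IH.
- move=> HP.
  have Pnil : forall x, P x -> Defs.sval x /\ Pr x.1.1 by move=> x /HP /nilE.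
  have nilP : forall x : scar B, Defs.sval x -> Pr x.1.1 -> P x by move=> x sx h; apply/HP/nilE.
  split.
  + split; [split|split].
    * by move=> x /Pnil [].
    * split.
        move=> x y sy exy /Pnil [sx hx]; apply: nilP => //.
        move/seqvE: exy => /I_Pr h.
        have h1 : Pr (num x * den y) by apply: Pr_mull; apply/num_Pr.
        have h2 : Pr (num y * den x).
          by have := @Pr_add _ _ h1 (@Pr_opp _ h); rewrite opprB addrC subrK.
        by case/Pr_mul: h2 => [/num_Pr //| /(@den_notPr x sx) []].
      split; first by apply: nilP; [exact: sval_zero|exact: Pr0].
      split.
        move=> x y /Pnil [sx hx] /Pnil [sy hy]; apply: nilP; first exact: sval_add.
        by rewrite /=; apply: Pr_add; apply: Pr_mull; apply: Pr_mull.
      split.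
        by move=> x /Pnil [sx hx]; apply: nilP; [exact: sval_opp| exact: Pr_opp].
      move=> a x sa /Pnil [sx hx]; apply: nilP; first exact: sval_mul.
      by rewrite /=; apply: Pr_mulr.
    * by move=> /Pnil [_]; rewrite /=; exact: notPr1.
    * by move=> x y sx sy /Pnil [_ /=]; case/Pr_mul => h; [left|right]; exact: nilP.
  + exists ((z0, 0%N), bone R); split; first by split; [exact: inR'_R|exact: offC_bone].
    have nz : num ((z0, 0%N), bone R) = z0 by rewrite /num /= expr0 mulr1.
    move=> x; split.
      move=> /Pnil [sx hx]; split=> //; apply/seqv0E; rewrite num_mul nz.
      by apply/Hz0; apply/num_Pr.
    by move=> [sx /seqv0E]; rewrite num_mul nz => /Hz0 /num_Pr hx; exact: nilP.
Qed.
End Blow.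
End Noeth.
End RLevel.

Theorem mainTheorem7 (R : comNzRingType) (m : R -> Prop)
    (G : porderZmodType) (nu : R -> option G) :
  ordered_abelian_group G ->
  noetherian R -> local_ring m ->
  is_valuation nu -> centered_on nu m ->
  exists (b : R) (as_ : seq R),
    nu b <> None /\
    (forall a, a \in as_ -> ole (nu b) (nu a)) /\
    (forall P : scar (blowup nu b as_) -> Prop,
       is_associated_prime P <->
       (forall x, P x <-> nilradical x)).
Proof.
move=> HG Hn _ Hval _.
have [b [hb Hb]] := @gen_b R G nu Hval Hn.
exists b, [::]; split; first exact: hb.
split; first by [].
exact: (@core R G nu Hval Hn HG b hb Hb).
Qed.
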